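(* (1) For every permutation $w\in S_k$ there is a sequence $\mathbf b=(b_1,\dots,b_{k-1})$ of non-negative integers with $\sum_i b_i=\ell(w)$ such that the coefficient of $v^{\mathbf b}$ in $R_w$ is non-zero. (2) For every matching sequence $\mathbf b=(b_1,\dots,b_{k-1})$ there is a permutation $w\in S_k$ with $\ell(w)=\sum_i b_i$ such that the coefficient of $v^{\mathbf b}$ in $R_w$ is non-zero.
   Context: Fix $k\ge 2$. Permutations $u\in S_k$ are written in one-line notation $u=(u(1),\dots,u(k))$. An inversion of $u$ is a pair of positions $(i,j)$ with $i<j$ and $u(i)>u(j)$; $\ell(u)$ is the number of inversions. For $1\le n<m\le k$ let $u\circ(n\,m)$ denote the permutation obtained from $u$ by swapping the entries in positions $n$ and $m$. We say $u'$ covers $u$ if $u'=u\circ(n\,m)$ for some $n<m$ and $\ell(u')=\ell(u)+1$; the weight of this cover is $v_n+v_{n+1}+\dots+v_{m-1}$. For $w\in S_k$, $R_w\in\mathbb Z[v_1,\dots,v_{k-1}]$ is the sum, over all chains $\mathrm{id}=u_0,u_1,\dots,u_{\ell(w)}=w$ in which each $u_{i+1}$ covers $u_i$, of the product of the weights of the covers $u_i\to u_{i+1}$. $v^{\mathbf b}=v_1^{b_1}\cdots v_{k-1}^{b_{k-1}}$. The bipartite graph $\mathcal B_{\mathbf b}$ has upper vertex class $U=\{(j,l):1\le j\le l\le k-1\}$ and lower vertex class $D_{\mathbf b}=\{(i,t):1\le i\le k-1,\ 1\le t\le b_i\}$, with an edge between $(j,l)\in U$ and $(i,t)\in D_{\mathbf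 b}$ if and only if $j\le i\le l$; $\mathbf b$ is a matching sequence if $\mathcal B_{\mathbf b}$ has a matching covering all of $D_{\mathbf b}$. *)

(* Defs.v *)
From HB Require Import structures.
From mathcomp Require Import all_boot all_order all_algebra all_fingroup.
Set Implicit Arguments. Unset Strict Implicit. Unset Printing Implicit Defensive.
Import GRing.Theory.

(* Conventions: positions and values of u : 'S_k are 0-based ('I_k);
   position p (0-based) = position p+1 of the paper.  Variable index
   j : 'I_k.-1 stands for v_{j+1}. *)

Definition mono (n : nat) := {ffun 'I_n -> nat}.
Definition mulm n (a b : mono n) : mono n := [ffun i => a i + b i].
Definition mono1 n : mono n := [ffun => 0%N].
Definition monoX n (j : 'I_n) : mono n := [ffun i => (i == j) : nat].

(* a polynomial is a finite formal sum of terms c * v^a *)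
Definition mpoly (n : nat) := seq (mono n * int).
Definition madd n (p q : mpoly n) : mpoly n := p ++ q.
Definition mmul n (p q : mpoly n) : mpoly n :=
  [seq (mulm a.1 b.1, (a.2 * b.2)%R) | a <- p, b <- q].
Definition mone n : mpoly n := [:: (mono1 n, 1%R)].
Definition mvar n (j : 'I_n) : mpoly n := [:: (monoX j, 1%R)].
Definition mcoef n (p : mpoly n) (b : mono n) : int :=
  (\sum_(t <- p | t.1 == b) t.2)%R.

Definition ell k (u : 'S_k) : nat :=
  #|[set p : 'I_k * 'I_k | (p.1 < p.2) && (u p.2 < u p.1)]|.

(* u o (n m): swap the entries in positions n and m *)
Definition swap_pos k (u : 'S_k) (n m : 'I_k) : 'S_k := (tperm n m * u)%g.
Lemma swap_posE k (u : 'S_k) (n m i : 'I_k) : swap_pos u n m i = u (tperm n m i).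
Proof. by rewrite /swap_pos permM. Qed.

Definition covers k (u u' : 'S_k) : bool :=
  [exists n : 'I_k, exists m : 'I_k, (n < m) && (u' == swap_pos u n m)]
  && (ell u' == (ell u).+1).

(* weight v_n + ... + v_{m-1} (paper, 1-based) = sum of variables with
   0-based index j, n <= j < m (0-based positions n < m) *)
Definition linform k (n m : 'I_k) : mpoly k.-1 :=
  flatten [seq mvar j | j : 'I_k.-1 <- enum {: 'I_k.-1} & (n <= j) && (j < m)].

(* weight of the cover u -> u'; the pair (n,m) is unique for a cover *)
Definition cover_wt k (u u' : 'S_k) : mpoly k.-1 :=
  flatten [seq linform p.1 p.2 | p : 'I_k * 'I_k <- enum {: 'I_k * 'I_k} &
             (p.1 < p.2) && (u' == swap_pos u p.1 p.2)].

Definition is_chain k (w : 'S_k) (s : (ell w).+1.-tuple 'S_k) : bool :=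
  [&& nth 1%g s 0 == 1%g, nth 1%g s (ell w) == w &
      all (fun i => covers (nth 1%g s i) (nth 1%g s i.+1)) (iota 0 (ell w))].

Definition chain_wt k (w : 'S_k) (s : (ell w).+1.-tuple 'S_k) : mpoly k.-1 :=
  foldr (@mmul _) (mone _)
    [seq cover_wt (nth 1%g s i) (nth 1%g s i.+1) | i <- iota 0 (ell w)].

Definition Rpoly k (w : 'S_k) : mpoly k.-1 :=
  flatten [seq chain_wt s | s : (ell w).+1.-tuple 'S_k <- enum {: (ell w).+1.-tuple 'S_k} & is_chain s].

(* U = {(j,l) : j <= l}, D_b = {(i,t) : t < b i} (0-based); edge iff j <= i <= l.
   A matching covering D_b is an injective map D_b -> U along edges. *)
Definition matching_seq k (b : mono k.-1) : Prop :=
  exists f : 'I_k.-1 -> nat -> 'I_k.-1 * 'I_k.-1,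
    (forall i t, t < b i -> ((f i t).1 <= (f i t).2) && ((f i t).1 <= i <= (f i t).2))
    /\ (forall i t i' t', t < b i -> t' < b i' -> f i t = f i' t' -> i = i' /\ t = t').

(* Main.v *)
Require Import Defs.
From HB Require Import structures.
From mathcomp Require Import all_boot all_order all_algebra all_fingroup.
From mathcomp Require Import zify.
Set Implicit Arguments. Unset Strict Implicit. Unset Printing Implicit Defensive.
Import GRing.Theory.

Section Swap.
Variable k : nat.
Implicit Types (u : 'S_k) (a c : 'I_k).

Lemma tperm_lt (x y a b : 'I_k) : val y = (val x).+1 -> a != b ->
  ~~ ((a == x) && (b == y)) -> ~~ ((a == y) && (b == x)) ->
  (tperm x y a < tperm x y b) = (a < b).
Proof.
move=> hy hab h1 h2.
case: (tpermP x y a) => [ea|ea|nax nay]; case: (tpermP x y b) => [eb|eb|nbx nby];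
  subst.
all: move: hab h1 h2; rewrite -?val_eqE /= ?hy.
all: try move: nax nay; try move: nbx nby; rewrite -?val_eqE /= ?hy.
all: lia.
Qed.
End Swap.
Section Swap2.
Variable k : nat.
Implicit Types (u : 'S_k) (a c : 'I_k).
Definition invs u := [set p : 'I_k * 'I_k | (p.1 < p.2) && (u p.2 < u p.1)].

Lemma swap_conj u a c p : swap_pos u a c p = tperm (u a) (u c) (u p).
Proof. by rewrite swap_posE -(permJ (tperm a c) u p) tpermJ. Qed.

Lemma ell_swap u a c : a < c -> val (u c) = (val (u a)).+1 ->
  ell (swap_pos u a c) = (ell u).+1.
Proof.
move=> ac huc.
have nin : (a, c) \notin invs u by rewrite inE /= ac /= -leqNgt huc.
have key : invs (swap_pos u a c) = (a, c) |: invs u.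
  apply/setP => -[p1 p2]; rewrite !inE /= !swap_conj.
  case: (boolP ((p1 == a) && (p2 == c))) => [/andP[/eqP-> /eqP->]|hne].
    by rewrite eqxx ac tpermL tpermR huc ltnSn.
  rewrite -[(p1,p2) == _]/((p1 == a) && (p2 == c)) (negbTE hne) orFb; case: (ltnP p1 p2) => h12 //=.
  apply: tperm_lt => //.
  - by rewrite (inj_eq perm_inj) -val_eqE /=; lia.
  - rewrite !(inj_eq perm_inj); apply/negP => /andP[/eqP e1 /eqP e2]; subst.
    by move: h12 ac; lia.
  - by rewrite !(inj_eq perm_inj) andbC.
by rewrite /ell -/(invs _) key cardsU1 nin.
Qed.
End Swap2.

Section Poly.
Variable n : nat.
Definition all1 (p : mpoly n) := all (fun t => t.2 == 1%R) p.

Lemma all1_mmul p q : all1 p -> all1 q -> all1 (mmul p q).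
Proof.
move=> /allP hp /allP hq; apply/allP => t /allpairsP[[x y] [/= xp yq ->]] /=.
by rewrite (eqP (hp _ xp)) (eqP (hq _ yq)) mulr1.
Qed.

Lemma all1_flatten (l : seq (mpoly n)) : all all1 l -> all1 (flatten l).
Proof.
elim: l => //= p l IH /andP[h1 h2]; rewrite /all1 all_cat.
by apply/andP; split; [exact: h1 | exact: IH].
Qed.

Lemma all1_foldr (l : seq (mpoly n)) : all all1 l -> all1 (foldr (@mmul n) (mone n) l).
Proof.
elim: l => [|p l IH] /=; first by rewrite /all1 /= ?eqxx.
by move=> /andP[h1 h2]; apply: all1_mmul => //; apply: IH.
Qed.

Lemma mcoefE (p : mpoly n) b : all1 p -> mcoef p b = ((count (fun t => t.1 == b) p)%:R)%R.
Proof.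
rewrite /mcoef; elim: p => [|x p IH] /=; first by rewrite big_nil.
move=> /andP[/eqP hx h1]; rewrite big_cons IH // natrD.
by case: (x.1 == b) => /=; rewrite ?hx ?add0r.
Qed.

Lemma mcoef_ne0 (p : mpoly n) b t : all1 p -> t \in p -> t.1 = b -> mcoef p b != 0%R.
Proof.
move=> h tp tb; rewrite mcoefE // Num.Theory.pnatr_eq0 -lt0n -has_count.
by apply/hasP; exists t => //; rewrite tb.
Qed.
End Poly.

Section Chain.
Variable k : nat.
Local Notation n := k.-1.

Lemma all1_linform (a c : 'I_k) : all1 (linform a c).
Proof.
apply: all1_flatten; apply/allP => p /mapP[j _ ->].
by rewrite /all1 /= ?eqxx.
Qed.

Lemma all1_cover (u u' : 'S_k) : all1 (cover_wt u u').
Proof. by apply: all1_flatten; apply/allP => p /mapP[x _ ->]; apply: all1_linform. Qed.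

Lemma all1_Rpoly (w : 'S_k) : all1 (Rpoly w).
Proof.
apply: all1_flatten; apply/allP => p /mapP[s _ ->].
by apply: all1_foldr; apply/allP => q /mapP[i _ ->]; apply: all1_cover.
Qed.

Lemma mem_linform (a c : 'I_k) (j : 'I_n) : a <= j < c -> (monoX j, 1%R) \in linform a c.
Proof.
move=> h; apply/flattenP; exists (mvar j); last by rewrite mem_seq1.
by apply: map_f; rewrite mem_filter h mem_enum.
Qed.

Lemma mem_cover (u : 'S_k) (a c : 'I_k) (j : 'I_n) : a < c -> a <= j < c ->
  (monoX j, 1%R) \in cover_wt u (swap_pos u a c).
Proof.
move=> ac h; apply/flattenP; exists (linform a c); last exact: mem_linform.
by apply: (map_f (fun p : 'I_k * 'I_k => linform p.1 p.2) (x := (a, c))); rewrite mem_filter /= ac eqxx mem_enum.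
Qed.

Lemma mem_foldr (l : seq nat) (F : nat -> mpoly n) (g : nat -> mono n) :
  (forall i, i \in l -> (g i, 1%R) \in F i) ->
  (foldr (fun i acc => mulm (g i) acc) (mono1 n) l, 1%R) \in foldr (@mmul n) (mone n) (map F l).
Proof.
elim: l => [|i l IH] /=; first by rewrite mem_seq1.
move=> h; have := IH (fun j jl => h j (mem_behead (s := i :: l) jl)).
move=> H; have := allpairs_f (fun a b => (mulm a.1 b.1, (a.2 * b.2)%R)) (h i (mem_head _ _)) H.
by rewrite /= mulr1.
Qed.
End Chain.

Section Chain2.
Variable k : nat.
Local Notation n := k.-1.

Definition chain_ok (u : 'S_k) (s : seq 'S_k) (js : seq nat) :=
  [/\ size s = (ell u).+1, size js = ell u, nth 1%g s 0 = 1%g, nth 1%g s (ell u) = u &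
   forall i, i < ell u -> exists a c : 'I_k, [/\ a < c,
     nth 1%g s i.+1 = swap_pos (nth 1%g s i) a c,
     ell (nth 1%g s i.+1) = (ell (nth 1%g s i)).+1 & a <= nth 0 js i < c]].

Definition monoJ (js : seq nat) : mono n := [ffun v : 'I_n => count_mem (val v) js].

Lemma foldr_gE (js : seq nat) (l : seq nat) (v : 'I_n) :
  (foldr (fun i acc => mulm [ffun x : 'I_n => ((val x) == nth 0 js i) : nat] acc) (mono1 n) l) v
  = count (fun i => nth 0 js i == val v) l.
Proof.
elim: l => [|i l IH] /=; first by rewrite ffunE.
by rewrite !ffunE IH eq_sym.
Qed.

Lemma chain_term u s js : chain_ok u s js -> (monoJ js, 1%R) \in Rpoly u.
Proof.
case=> hs hj h0 hl hc.
pose t : (ell u).+1.-tuple 'S_k := @Tuple _ _ s (introT eqP hs).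
apply/flattenP; exists (chain_wt t).
  apply: map_f; rewrite mem_filter mem_enum andbT /is_chain /= h0 hl !eqxx /=.
  apply/allP => i; rewrite mem_iota /= => /hc[a [c [ac e1 e2 _]]].
  rewrite /covers e2 eqxx andbT; apply/existsP; exists a; apply/existsP; exists c.
  by rewrite ac e1 eqxx.
rewrite /chain_wt.
have -> : monoJ js = foldr (fun i acc => mulm [ffun x : 'I_n => ((val x) == nth 0 js i) : nat] acc) (mono1 n) (iota 0 (ell u)).
  apply/ffunP => v; rewrite foldr_gE ffunE -hj.
  by rewrite -[in LHS](take_size js) -(map_nth_iota0 0 (leqnn _)) count_map.
apply: mem_foldr => i; rewrite mem_iota /= => /hc[a [c [ac e1 e2 hjc]]].
have jn : nth 0 js i < n by move: hjc (ltn_ord c); lia.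
have -> : [ffun x : 'I_n => ((val x) == nth 0 js i) : nat] = monoX (Ordinal jn).
  by apply/ffunP => x; rewrite !ffunE.
by rewrite e1; apply: mem_cover.
Qed.
End Chain2.

Section Chain3.
Variable k : nat.
Local Notation n := k.-1.

Lemma ell1 : ell (1%g : 'S_k) = 0.
Proof.
rewrite /ell; apply: eq_card0 => -[a b]; rewrite !inE /= !perm1.
by apply/negP => /andP[h1 h2]; move: h1 h2; lia.
Qed.

Lemma chain_base : chain_ok (1%g : 'S_k) [:: 1%g] [::].
Proof. by split; rewrite ?ell1 //. Qed.

Lemma chain_ext (u : 'S_k) s js (a c : 'I_k) j : chain_ok u s js -> a < c ->
  val (u c) = (val (u a)).+1 -> a <= j < c ->
  chain_ok (swap_pos u a c) (rcons s (swap_pos u a c)) (rcons js j).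
Proof.
case=> hs hj h0 hl hc ac huc hjc; have he := ell_swap ac huc.
split; rewrite ?he ?size_rcons ?hs ?hj //.
- by rewrite nth_rcons hs.
- by rewrite nth_rcons hs ltnn eqxx.
move=> i; rewrite ltnS leq_eqVlt => /orP[/eqP->|hi].
  exists a, c; rewrite !nth_rcons hs hj ltnn eqxx ltnSn hl; split => //.
  by rewrite ltnn eqxx.
have [a' [c' [h1 h2 h3 h4]]] := hc _ hi.
exists a', c'; rewrite !nth_rcons hs hj !ltnS hi (ltnW hi).
by split.
Qed.

Lemma sum_monoJ js : all (fun j => j < n) js -> \sum_(v < n) monoJ k js v = size js.
Proof.
elim: js => [|j js IH] /=.
  by rewrite big1 // => v _; rewrite ffunE.
move=> /andP[jn hall].
rewrite -(IH hall) -[in RHS](add1n (\sum_(v < n) _)).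
have -> : \sum_(v < n) monoJ k (j :: js) v = \sum_(v < n) ((val v == j) + monoJ k js v).
  by apply: eq_bigr => v _; rewrite !ffunE /= eq_sym.
rewrite big_split /=; congr (_ + _).
rewrite (bigD1 (Ordinal jn)) //= eqxx big1 // => v hv.
by move: hv; rewrite -val_eqE /=; case: eqP.
Qed.
End Chain3.

Section Part1.
Variable m : nat.
Local Notation k := m.+1.

Lemma swap_posK (u : 'S_k) a c : swap_pos (swap_pos u a c) a c = u.
Proof. by rewrite /swap_pos mulgA tperm2 mul1g. Qed.

Lemma adj_inv (w : 'S_k) : w != 1%g ->
  exists a c : 'I_k, a < c /\ val (w a) = (val (w c)).+1.
Proof.
move=> hw.
case: (pickP (fun p : 'I_k * 'I_k => (p.1 < p.2) && (val (w p.1) == (val (w p.2)).+1))).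
  by move=> [a c] /andP[h1 /eqP h2]; exists a, c.
move=> hno0.
have hno : forall a c : 'I_k, a < c -> val (w a) = (val (w c)).+1 -> False.
  by move=> a c h1 h2; have := hno0 (a, c); rewrite /= h1 h2 eqxx.
have key : forall q, q < m -> nat_of_ord ((w^-1)%g (inord q)) < nat_of_ord ((w^-1)%g (inord q.+1)).
  move=> q qm; set a := (w^-1)%g (inord q.+1); set c := (w^-1)%g (inord q).
  case: (ltngtP a c) => // h.
  - exfalso; apply: (hno a c h).
    by rewrite /a /c !permKV /= !inordK //; lia.
  - by move/val_inj: h => /(congr1 w); rewrite /a /c !permKV => /(congr1 val) /=; rewrite !inordK //; lia.
have up : forall q, q <= m -> q <= nat_of_ord ((w^-1)%g (inord q)).
  elim=> [|q IH] qm //; have := key q qm; have := IH (ltnW qm); lia.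
have down : forall d, d <= m -> nat_of_ord ((w^-1)%g (inord (m - d))) <= m - d.
  elim=> [|d IH] dm; first by rewrite subn0 /=; have := ltn_ord ((w^-1)%g (inord m)); lia.
  have := key (m - d.+1) ltac:(lia); have := IH (ltnW dm).
  have -> : (m - d.+1).+1 = m - d by lia.
  lia.
have id1 : (w^-1)%g = 1%g.
  apply/permP => x; rewrite perm1; apply/val_inj => /=.
  have xm : x <= m by have := ltn_ord x; lia.
  have := up x xm; have := down (m - x) ltac:(lia).
  rewrite subKn // inord_val => h1 h2; lia.
by move: hw; rewrite -(invgK w) id1 invg1 eqxx.
Qed.
End Part1.

Section Part1b.
Variable m : nat.
Local Notation k := m.+1.

Lemma chain_exists (w : 'S_k) : exists s js, chain_ok w s js.
Proof.
move: {2}(ell w) (erefl (ell w)) => N; elim: N w => [|N IH] w hN.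
  case: (eqVneq w 1%g) => [->|hw]; first by exists [:: 1%g], [::]; exact: chain_base.
  have [a [c [ac h]]] := adj_inv hw.
  have h' : val (swap_pos w a c c) = (val (swap_pos w a c a)).+1.
    by rewrite !swap_posE tpermL tpermR.
  by move: hN; rewrite -{1}(swap_posK w a c) ell_swap.
case: (eqVneq w 1%g) => [hw|hw]; first by move: hN; rewrite hw ell1.
have [a [c [ac h]]] := adj_inv hw.
have h' : val (swap_pos w a c c) = (val (swap_pos w a c a)).+1.
  by rewrite !swap_posE tpermL tpermR.
have e := ell_swap ac h'; rewrite swap_posK in e.
have [s [js hc]] := IH (swap_pos w a c) ltac:(by move: hN; rewrite e => -[]).
exists (rcons s w), (rcons js a).
have := chain_ext (j := a) hc ac h' ltac:(by rewrite leqnn ac).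
by rewrite swap_posK.
Qed.
End Part1b.

Lemma chain_all k (u : 'S_k) s js : chain_ok u s js -> all (fun j => j < k.-1) js.
Proof.
case=> _ hj _ _ hc; apply/(all_nthP 0) => i; rewrite hj => /hc[a [c [ac _ _ /andP[_ h]]]].
by have := ltn_ord c; lia.
Qed.

Section Part2.
Variable n' : nat.
Local Notation n := n'.+1.
Local Notation k := n'.+2.
Variable b : mono n.
Variable f : 'I_n -> nat -> 'I_n * 'I_n.
Hypothesis hf1 : forall i t, t < b i -> ((f i t).1 <= (f i t).2) && ((f i t).1 <= i <= (f i t).2).
Hypothesis hf2 : forall i t i' t', t < b i -> t' < b i' -> f i t = f i' t' -> i = i' /\ t = t'.

Definition UV (u : 'S_k) (p : nat) : nat := nat_of_ord (u (inord p)).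
Definition RI (u : 'S_k) (j : nat) := forall p p', j < p -> p < p' -> p' <= n -> UV u p < UV u p'.
Definition Y (u : 'S_k) (j : nat) (e : 'I_n) : nat := UV u e.+1 - (e - j).

Lemma RI_ge u j p : RI u j -> j < p <= n -> p - j - 1 <= UV u p.
Proof.
move=> hr; elim: p => [|p IH] //= /andP[h1 h2].
case: (ltnP j p) => hjp; last by have -> : p.+1 - j - 1 = 0 by lia.
have := IH ltac:(lia); have := hr p p.+1 hjp (ltnSn _) h2; lia.
Qed.

Lemma RI_lt u j p p' : RI u j -> j < p -> p <= p' -> p' <= n -> UV u p + (p' - p) <= UV u p'.
Proof.
move=> hr hjp; elim: p' => [|p' IH]; first by lia.
rewrite leq_eqVlt => /orP[/eqP<-|hp] hn; first by rewrite subnn addn0.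
have := IH ltac:(lia) ltac:(lia); have := hr p' p'.+1 ltac:(lia) (ltnSn _) hn; lia.
Qed.

Lemma Y_mono u j (e1 e2 : 'I_n) : RI u j -> j <= e1 -> e1 <= e2 -> Y u j e1 <= Y u j e2.
Proof.
move=> hr h1 h2; rewrite /Y.
have := RI_lt hr (p := e1.+1) (p' := e2.+1) ltac:(lia) ltac:(lia) ltac:(have := ltn_ord e2; lia).
have := RI_ge (p := e1.+1) hr ltac:(have := ltn_ord e1; lia).
lia.
Qed.

Lemma UV_Y u j (e : 'I_n) : RI u j -> j <= e -> UV u e.+1 = Y u j e + (e - j).
Proof.
move=> hr h; rewrite /Y; have := RI_ge (p := e.+1) hr ltac:(have := ltn_ord e; lia); lia.
Qed.

Definition B := (\sum_i b i).+1.
Definition unit := ('I_n * 'I_B)%type.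
Definition F (x : unit) := f x.1 x.2.
Definition valid (x : unit) := x.2 < b x.1.

Lemma F_inj (x y : unit) : valid x -> valid y -> F x = F y -> x = y.
Proof.
case: x => [i t]; case: y => [i' t'] hx hy hF.
have [e1 e2] := hf2 hx hy hF.
by move: e1 e2 => /= -> /val_inj /= ->.
Qed.

Lemma b_lt_B i : b i < B.
Proof. by rewrite /B ltnS (bigD1 i) //= leq_addr. Qed.

Definition pend (j t0 : nat) : {set unit} :=
  [set x : unit | valid x && ((j < x.1) || ((nat_of_ord x.1 == j) && (t0 <= x.2)))].
Definition pc (j t0 : nat) (e : 'I_n) :=
  #|[set x in pend j t0 | ((F x).2 == e) && ((F x).1 <= j)]|.
Definition CI (u : 'S_k) (j t0 : nat) := forall h, 0 < h ->
  #|[set e : 'I_n | h <= pc j t0 e]| <= #|[set e : 'I_n | (j <= e) && (h <= Y u j e)]|.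

Definition State (j t0 : nat) := exists u s js, [/\ chain_ok u s js, RI u j, CI u j t0 &
  forall v : 'I_n, count_mem (nat_of_ord v) js = if v < j then b v else if nat_of_ord v == j then t0 else 0].


Lemma UV1 p : p <= n -> UV 1%g p = p.
Proof. by move=> h; rewrite /UV perm1 inordK. Qed.

Lemma state0 : State 0 0.
Proof.
exists 1%g, [:: 1%g], [::]; split.
- exact: chain_base.
- by move=> p p' h1 h2 h3; rewrite !UV1 //; lia.
- move=> h h0.
  have pc1 : forall e, pc 0 0 e <= 1.
    move=> e; apply/card_le1_eqP => x y; rewrite !inE => /andP[/andP[vx _] /andP[/eqP ex hx]] /andP[/andP[vy _] /andP[/eqP ey hy]].
    apply: F_inj => //; move: ex ey hx hy.
    case: (F x) => [a1 a2]; case: (F y) => [c1 c2] /= -> -> ha hc.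
    by congr pair; apply/val_inj => /=; lia.
  have Y1 : forall e, Y 1%g 0 e = 1.
    by move=> e; rewrite /Y UV1 ?subn0; [lia | have := ltn_ord e; lia].
  case: (ltnP 1 h) => hh.
    rewrite (_ : [set e | h <= pc 0 0 e] = set0) ?cards0 //.
    by apply/setP => e; rewrite !inE; have := pc1 e; lia.
  rewrite (_ : [set e : 'I_n | (0 <= e) && (h <= Y 1%g 0 e)] = setT).
    by rewrite cardsT max_card.
  by apply/setP => e; rewrite !inE Y1; lia.
- by move=> v; rewrite ltn0 /=; case: eqP.
Qed.


Lemma pend_out (jj : 'I_n) : pend jj.+1 0 = pend jj (b jj).
Proof.
apply/setP => -[i t]; rewrite !inE /valid /=.
case: (ltnP t (b i)) => ht //=.
case: (ltngtP jj i) => h /=.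
- by apply/orP; case: (ltngtP jj.+1 i) => h2; [left | exfalso; lia | right; apply/eqP].
- by apply/negP => /orP[|/eqP]; lia.
- move/val_inj: h ht => <- ht; rewrite [b jj <= t]leqNgt ht.
  by apply/negP => /orP[|/andP[/eqP]]; lia.
Qed.

Lemma pend_out_mem (jj : 'I_n) x : x \in pend jj (b jj) -> valid x /\ jj < x.1.
Proof.
rewrite inE => /andP[vx /orP[h|/andP[/eqP h1 h2]]] //.
by move: vx; rewrite /valid (_ : x.1 = jj) ?ltnNge ?h2 //; apply/val_inj.
Qed.

Lemma F_bounds x : valid x -> (F x).1 <= x.1 <= (F x).2.
Proof. by move=> vx; have /andP[_ ->] := hf1 vx. Qed.

Lemma pc_out_pos (jj : 'I_n) l (e : 'I_n) :
  0 < #|[set x in pend jj (b jj) | ((F x).2 == e) && ((F x).1 <= l)]| -> jj < e.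
Proof.
move=> /card_gt0P[x]; rewrite inE => /andP[hxP /andP[/eqP ex _]].
have [vx hx] := pend_out_mem hxP.
have /andP[_ h2] := F_bounds vx; rewrite ex in h2; exact: leq_trans hx h2.
Qed.

Lemma pc_out_le (jj : 'I_n) (e : 'I_n) : pc jj.+1 0 e <= (pc jj (b jj) e).+1.
Proof.
rewrite /pc pend_out.
set P := pend jj (b jj).
set C := [set x in P | ((F x).2 == e) && ((F x).1 == jj.+1 :> nat)].
have C1 : #|C| <= 1.
  apply/card_le1_eqP => x y; rewrite inE => /andP[hxP /andP[/eqP ex hx]]; rewrite inE => /andP[hyP /andP[/eqP ey hy]].
  have [vx _] := pend_out_mem hxP; have [vy _] := pend_out_mem hyP.
  apply: F_inj => //; move: ex ey hx hy.
  case: (F x) => [a1 a2]; case: (F y) => [c1 c2] /= -> -> /eqP ha /eqP hc.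
  by congr pair; apply/val_inj => /=; lia.
set A := [set x in P | ((F x).2 == e) && ((F x).1 <= jj)].
apply: (@leq_trans (#|A| + #|C|)); last by apply: (leq_trans (leq_add (leqnn #|A|) C1)); rewrite addn1.
apply: leq_trans (leq_card_setU _ _); apply: subset_leq_card.
apply/subsetP => x; rewrite !inE => /andP[xP /andP[ex hx]].
by rewrite xP ex /=; case: (ltngtP (F x).1 jj.+1) hx => //= h; lia.
Qed.

Lemma step_out (jj : 'I_n) : jj.+1 < n -> State jj (b jj) -> State jj.+1 0.
Proof.
move=> hjn [u [s [js [hc hr hci hcnt]]]].
have hr' : RI u jj.+1 by move=> p p' h1 h2 h3; apply: hr => //; lia.
have Y' : forall e : 'I_n, jj < e -> Y u jj.+1 e = (Y u jj e).+1.
  move=> e he; have := UV_Y hr (e := e) ltac:(lia); rewrite /Y; lia.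
exists u, s, js; split => //.
- move=> h h0.
  have posL : forall e : 'I_n, 0 < pc jj.+1 0 e -> jj < e.
    by move=> e; rewrite /pc pend_out => /pc_out_pos.
  have posR : forall e : 'I_n, 0 < pc jj (b jj) e -> jj < e.
    by move=> e /pc_out_pos.
  case: (eqVneq h 1) => [->|/eqP h1].
    apply: (@leq_trans #|[set e : 'I_n | jj < e]|).
      by apply: subset_leq_card; apply/subsetP => e; rewrite !inE => /posL.
    apply: subset_leq_card; apply/subsetP => e; rewrite !inE => he.
    by rewrite he Y'.
  have L1 : #|[set e | h <= pc jj.+1 0 e]| <= #|[set e | h.-1 <= pc jj (b jj) e]|.
    apply: subset_leq_card; apply/subsetP => e; rewrite !inE => he.
    by have := pc_out_le jj e; lia.
  have L2 := hci h.-1 ltac:(lia).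
  case: (leqP h.-1 (Y u jj jj)) => hY.
    apply: (leq_trans L1); apply: (@leq_trans #|[set e : 'I_n | jj < e]|).
      by apply: subset_leq_card; apply/subsetP => e; rewrite !inE => he; apply: posR; lia.
    apply: subset_leq_card; apply/subsetP => e; rewrite !inE => he.
    rewrite he Y' //=; have := Y_mono (e1 := jj) (e2 := e) hr (leqnn _) (ltnW he); lia.
  apply: (leq_trans L1); apply: (leq_trans L2).
  apply: subset_leq_card; apply/subsetP => e; rewrite !inE => /andP[h1' h2'].
  case: (ltngtP jj e) h1' => // he _.
    by rewrite Y' //=; lia.
  by move/val_inj: he h2' => <-; lia.
- move=> v; rewrite hcnt; case: (ltngtP v jj) => h.
  + by rewrite ltnS (ltnW h).
  + by rewrite ltnNge h /=; case: eqP; lia.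
  + by rewrite h ltnSn; congr (b _); apply/val_inj.
Qed.


Lemma step_in (jj : 'I_n) t0 : t0 < b jj -> State jj t0 -> State jj t0.+1.
Proof.
move=> ht [u [s [js [hc hr hci hcnt]]]].
pose x0 : unit := (jj, Ordinal (ltn_trans ht (b_lt_B jj))).
have vx0 : valid x0 by [].
have Fx0 : F x0 = f jj t0 by [].
have x0P : x0 \in pend jj t0 by rewrite inE vx0 /= eqxx leqnn orbT.
have /and3P[_ hte hje] := hf1 ht; rewrite -Fx0 in hte hje.
set e := (F x0).2 in hje.
set v := pc jj t0 e.
have v0 : 0 < v.
  by apply/card_gt0P; exists x0; rewrite inE x0P eqxx hte.
have [e0 he0] : exists e0 : 'I_n, (jj <= e0) && (v <= Y u jj e0).
  have : 0 < #|[set i : 'I_n | (jj <= i) && (v <= Y u jj i)]|.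
    apply: leq_trans (hci v v0); apply/card_gt0P; exists e; rewrite inE.
    exact: leqnn.
  by move/card_gt0P => [e0]; rewrite inE => ?; exists e0.
case: (@arg_minnP _ e0 (fun i : 'I_n => (jj <= i) && (v <= Y u jj i)) (fun i : 'I_n => nat_of_ord i) he0) => e' /andP[hje' hve'] emin.
have below : forall i : 'I_n, jj <= i -> i < e' -> Y u jj i < v.
  move=> i h1 h2; rewrite ltnNge; apply/negP => h3.
  by have := emin i; rewrite h1 h3 => /(_ isT); lia.
set W := Y u jj e' in hve'.
have UVe' : UV u e'.+1 = W + (e' - jj) by apply: UV_Y.
set q := (UV u e'.+1).-1.
have hq : UV u e'.+1 = q.+1 by rewrite /q; lia.
have lowq : forall p, jj < p -> p <= e' -> UV u p < q.
  move=> p h1 h2.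
  have pn : p.-1 < n by have := ltn_ord e'; lia.
  have := UV_Y hr (e := Ordinal pn) ltac:(rewrite /=; lia).
  have := below (Ordinal pn) ltac:(rewrite /=; lia) ltac:(rewrite /=; lia).
  rewrite /= (_ : p.-1.+1 = p) //; [| lia].
  move=> h3 h4; rewrite h4; move: UVe' hq; rewrite /W; lia.
have highq : forall p, e'.+1 < p -> p <= n -> q < UV u p.
  move=> p h1 h2; have := hr e'.+1 p ltac:(lia) h1 h2; lia.
have qk : q < n.+1.
  have := ltn_ord (u (inord e'.+1)); rewrite -/(UV u e'.+1); lia.
pose a := (u^-1)%g (inord q : 'I_k).
have hua : nat_of_ord (u a) = q by rewrite /a permKV inordK.
have ha : a <= jj.
  rewrite leqNgt; apply/negP => hja.
  have an : a <= n by have := ltn_ord a; lia.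
  have : UV u a = q by rewrite /UV inord_val.
  case: (ltngtP a e'.+1) => h.
  - by have := lowq a hja ltac:(lia); lia.
  - by have := highq a h an; lia.
  - by rewrite h hq; lia.
have e'n : e'.+1 < n.+1 by have := ltn_ord e'; lia.
pose c : 'I_k := inord e'.+1.
have hc' : nat_of_ord c = e'.+1 by rewrite /c inordK.
have ac : a < c by rewrite hc'; lia.
have huc : nat_of_ord (u c) = (nat_of_ord (u a)).+1 by rewrite hua -hq.
have hjc : a <= jj < c by rewrite ha hc' /=; lia.
have hc2 := chain_ext hc ac huc hjc.
set u' := swap_pos u a c in hc2.
have UV' : forall p, jj < p -> p <= n -> UV u' p = if p == e'.+1 then q else UV u p.
  move=> p h1 h2; rewrite /UV /u' swap_posE.
  case: eqP => hp.
    by rewrite (_ : inord p = c) ?tpermR // /c hp.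
  rewrite tpermD //.
  - apply/eqP => /(congr1 (@nat_of_ord _)); rewrite inordK; lia.
  - apply/eqP => /(congr1 (@nat_of_ord _)); rewrite inordK ?hc'; lia.
have hr' : RI u' jj.
  move=> p p' h1 h2 h3; rewrite !UV' //; try lia.
  case: (eqVneq p e'.+1) => hp; case: (eqVneq p' e'.+1) => hp'.
  - lia.
  - by have := hr p p' h1 h2 h3; rewrite hp hq; lia.
  - by apply: lowq => //; move: hp' h2 => ->; lia.
  - exact: hr.
have Y'E : forall i : 'I_n, jj <= i -> Y u' jj i = if i == e' then W.-1 else Y u jj i.
  move=> i hi; rewrite /Y UV' //.
  rewrite eqSS; case: (eqVneq i e') => [->|ne].
    by rewrite eqxx; move: UVe' hq; rewrite /W; lia.
  by rewrite (_ : (nat_of_ord i == e') = false) //; apply/negbTE; rewrite val_eqE.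
have pendD : pend jj t0.+1 = pend jj t0 :\ x0.
  apply/setP => -[i t]; rewrite !inE /valid /=.
  case: (eqVneq (i, t) x0) => [[-> ->]|hne] /=; first by rewrite !ltnn /= ?andbF ?andbT.
  case: (eqVneq i jj) => [ei|nei].
    subst i; rewrite ltnn eqxx /=.
    have : t != Ordinal (ltn_trans ht (b_lt_B jj)) by apply: contraNneq hne => ->.
    rewrite -val_eqE /= => /eqP ht2.
    by case: (ltngtP t0 t) => //; lia.
  have -> : (nat_of_ord i == nat_of_ord jj) = false by apply/negbTE; rewrite val_eqE.
  by rewrite /= ?andbF ?andFb ?orbF.
have pcE : forall i, pc jj t0 i = (i == e) + pc jj t0.+1 i.
  move=> i; rewrite /pc pendD (cardsD1 x0) inE x0P /= -/e.
  congr (_ + _); last by apply: eq_card => x; rewrite !inE andbA.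
  by rewrite eq_sym hte andbT.
have pcle : forall i, pc jj t0.+1 i <= pc jj t0 i by move=> i; rewrite pcE leq_addl.
exists u', (rcons s u'), (rcons js jj); split => //.
- move=> h h0; case: (eqVneq h W) => [hW|/eqP hW].
  + have S1 : #|[set i | h <= pc jj t0.+1 i]| <= #|[set i | v <= pc jj t0 i] :\ e|.
      apply: subset_leq_card; apply/subsetP => i; rewrite !inE => hi.
      have hvi : v <= pc jj t0.+1 i by lia.
      have := pcE e; rewrite eqxx -/v /= => hv.
      case: (eqVneq i e) => [ie|ne].
        by subst i; lia.
      have := pcE i; rewrite (negbTE ne) /= => hpi.
      lia.
    have S2 : #|[set i | v <= pc jj t0 i]| = 1 + #|[set i | v <= pc jj t0 i] :\ e|.
      by rewrite (cardsD1 e) inE -/v leqnn.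
    have S3 : #|[set i : 'I_n | (jj <= i) && (v <= Y u jj i)]| <= #|[set i : 'I_n | e' <= i]|.
      apply: subset_leq_card; apply/subsetP => i; rewrite !inE => hi.
      exact: emin.
    have S4 : #|[set i : 'I_n | e' <= i]| = 1 + #|[set i : 'I_n | e' < i]|.
      rewrite (cardsD1 e') inE leqnn; congr (_ + _); apply: eq_card => i; rewrite !inE.
      by rewrite ltn_neqAle val_eqE eq_sym.
    have S5 : #|[set i : 'I_n | e' < i]| <= #|[set i : 'I_n | (jj <= i) && (h <= Y u' jj i)]|.
      apply: subset_leq_card; apply/subsetP => i; rewrite !inE => hi.
      have hji : jj <= i by lia.
      rewrite hji Y'E // (_ : (i == e') = false); last by apply/negbTE; rewrite -val_eqE /= neq_ltn hi orbT.
      by rewrite hW; apply: Y_mono => //; lia.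
    have H := leq_trans (hci v v0) S3; move: H; rewrite S2 S4 leq_add2l => H.
    exact: leq_trans S1 (leq_trans H S5).
  + apply: leq_trans (_ : #|[set i | h <= pc jj t0 i]| <= _).
      apply: subset_leq_card; apply/subsetP => i; rewrite !inE => hi.
      exact: leq_trans hi (pcle i).
    apply: leq_trans (hci h h0) _; apply: subset_leq_card; apply/subsetP => i; rewrite !inE.
    case/andP => hji hi; rewrite hji Y'E //; case: eqP => [ie|_] //; subst i.
    by move: hi; rewrite -/W; lia.
- move=> w; rewrite -cats1 count_cat /= hcnt addn0.
  case: (ltngtP w jj) => hw.
  + by rewrite addn0.
  + by [].
  + by rewrite addn1.
Qed.


Lemma inner_all (jj : 'I_n) t : t <= b jj -> State jj 0 -> State jj t.
Proof.
elim: t => [|t IH] // ht h0.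
exact: step_in (IH (ltnW ht) h0).
Qed.

Lemma outer_all j : j < n -> State j 0.
Proof.
elim: j => [|j IH] hj; first exact: state0.
have hj' : j < n by lia.
have := inner_all (jj := Ordinal hj') (leqnn _) (IH hj').
exact: step_out.
Qed.

Lemma part2_sec : exists w : 'S_k, ell w = (\sum_(i < n) b i)%N /\ mcoef (Rpoly w) b != 0%R.
Proof.
have := inner_all (jj := ord_max) (leqnn _) (outer_all (ltnSn n')).
move=> [u [s [js [hc _ _ hcnt]]]].
have hb : monoJ n.+1 js = b.
  apply/ffunP => v; rewrite ffunE hcnt /=.
  case: (ltngtP v n') => hv //.
    by have := ltn_ord v; lia.
  by congr (b _); apply/val_inj.
exists u; split.
  have [_ hj _ _ _] := hc.
  by rewrite -hj -(sum_monoJ (chain_all hc)) hb.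
by apply: (mcoef_ne0 (all1_Rpoly u) (chain_term hc)).
Qed.

End Part2.

Unset Implicit Arguments.

Theorem mainTheorem9 (k : nat) (hk : 2 <= k) :
  (forall w : 'S_k, exists b : mono k.-1,
      (\sum_(i < k.-1) b i)%N = ell w /\ mcoef (Rpoly w) b != 0%R)
  /\
  (forall b : mono k.-1, matching_seq b ->
      exists w : 'S_k, ell w = (\sum_(i < k.-1) b i)%N /\ mcoef (Rpoly w) b != 0%R).
Proof.
case: k hk => [|[|n']] // _.
split.
- move=> w; have [s [js hc]] := chain_exists w.
  exists (monoJ _ js); split.
  + by have [_ hj _ _ _] := hc; rewrite (sum_monoJ (chain_all hc)) hj.
  + exact: mcoef_ne0 (all1_Rpoly w) (chain_term hc) erefl.
- move=> b [f [hf1 hf2]]; exact: (part2_sec hf1 hf2).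
Qed.
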